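(* For any integers $k,s\geq 2$ and any reals $K,\varepsilon>0$ there exists a constant $C=C(k,s,K,\varepsilon)>0$ such that the following holds. Let $G$ be a graph on $n$ vertices which contains no copy of $K_{s,s}$ as a subgraph, and let $V(G)=A\cup B$ be a partition with at least $e(A,B)\geq Cn^{1+1/k}$ crossing edges. Assume that the graph $G_1$ on $V(G)$ whose edges are the crossing edges (the edges of $G$ between $A$ and $B$) is $K$-almost-regular. Then at least a $(1-\varepsilon)$-fraction of the alternating paths of length $k$ in $G$ are induced subgraphs of $G$.
   Context: A graph is $K$-almost-regular if its maximum degree is at most $K$ times its minimum degree. An alternating path of length $k$ is a path in $G$ with $k$ edges (on $k+1$ distinct vertices) all of whose edges have one endpoint in $A$ and the other in $B$. Such a path is induced if $G$ has no edges between its vertices other than the path edges. *)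

(* Defs.v *)
From HB Require Import structures.
From mathcomp Require Import all_boot all_order all_algebra.
From mathcomp Require Import all_classical all_reals exp.
Set Implicit Arguments. Unset Strict Implicit. Unset Printing Implicit Defensive.
Import Order.TTheory GRing.Theory Num.Theory.

(* A simple graph on a finite vertex type T is a symmetric irreflexive
   relation e : rel T.  The partition V(G) = A ∪ B is given by A and B := ~: A. *)

Section Defs.
Variables (T : finType) (e : rel T) (A : {set T}).

Definition crossing (x y : T) : bool := e x y && ((x \in A) != (y \in A)).

(* e(A,B): number of edges with one endpoint in A and the other in B = ~: A;
   each edge is counted once, via its orientation from A to B *)
Definition cross_edges : nat :=
  #|[set p : T * T | e p.1 p.2 && (p.1 \in A) && (p.2 \notin A)]|.

Definition deg1 (v : T) : nat := #|[set u | crossing v u]|.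

Definition almost_regular (R : numDomainType) (K : R) : Prop :=
  forall u v : T, ((deg1 u)%:R <= K * (deg1 v)%:R)%R.

Definition Kss_free (s : nat) : Prop :=
  ~ exists X Y : {set T},
      [/\ #|X| = s, #|Y| = s, [disjoint X & Y] &
          forall x y, x \in X -> y \in Y -> e x y].

Definition alt_path (k : nat) (p : {ffun 'I_k.+1 -> T}) : bool :=
  injectiveb p &&
  [forall i : 'I_k, crossing (p (inord i)) (p (inord i.+1))].

Definition induced_path (k : nat) (p : {ffun 'I_k.+1 -> T}) : bool :=
  [forall i : 'I_k.+1, forall j : 'I_k.+1,
     e (p i) (p j) ==> ((i : nat).+1 == j) || ((j : nat).+1 == i)].

Definition alt_paths (k : nat) : {set {ffun 'I_k.+1 -> T}} :=
  [set p | alt_path p].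

Definition induced_alt_paths (k : nat) : {set {ffun 'I_k.+1 -> T}} :=
  [set p | alt_path p && induced_path p].

End Defs.

(* Main.v *)
Require Import Defs.
From HB Require Import structures.
From mathcomp Require Import all_boot all_order all_algebra.
From mathcomp Require Import all_classical all_reals exp.
From mathcomp Require Import zify.
Import Order.TTheory GRing.Theory Num.Theory.
Set Implicit Arguments. Unset Strict Implicit. Unset Printing Implicit Defensive.

Section Seqs.
Variable T : finType.

Fixpoint allseq (n : nat) : seq (seq T) :=
  if n is n'.+1 then [seq x :: s | x <- enum T, s <- allseq n'] else [:: [::]].

Lemma big_allseqS (F : seq T -> nat) n :
  \sum_(s <- allseq n.+1) F s = \sum_x \sum_(s <- allseq n) F (x :: s).
Proof. by rewrite /= big_allpairs_dep /= big_enum. Qed.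

Lemma big_allseq0 (F : seq T -> nat) : \sum_(s <- allseq 0) F s = F [::].
Proof. by rewrite /= big_seq1. Qed.

Lemma big_allseq1 (F : seq T -> nat) : \sum_(s <- allseq 1) F s = \sum_x F [:: x].
Proof. by rewrite big_allseqS; apply: eq_bigr => x _; rewrite big_allseq0. Qed.

Lemma big_allseq_cat a b (F : seq T -> nat) :
  \sum_(s <- allseq (a + b)) F s =
  \sum_(s <- allseq a) \sum_(t <- allseq b) F (s ++ t).
Proof.
elim: a F => [|a IH] F; first by rewrite add0n big_allseq0.
rewrite addSn !big_allseqS; apply: eq_bigr => x _.
by rewrite (IH (fun s => F (x :: s))).
Qed.

Lemma mem_allseq n s : (s \in allseq n) = (size s == n).
Proof.
elim: n s => [|n IH] s; first by case: s.
apply/allpairsP/idP => [[[x t]] /= [_ Ht ->]|].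
  by rewrite /= eqSS -IH.
case: s => [//|x t] /=; rewrite eqSS -IH => Ht.
by exists (x, t); rewrite mem_enum.
Qed.

Lemma uniq_allseq n : uniq (allseq n).
Proof.
elim: n => [//|n IH] /=.
apply: allpairs_uniq_dep => //; first exact: enum_uniq.
by move=> [x s] [y t] _ _ /= [-> ->].
Qed.

Lemma nth_codom_ord (x0 : T) n (p : {ffun 'I_n -> T}) (i : 'I_n) :
  nth x0 (codom p) i = p i.
Proof.
rewrite codomE (nth_map i); last by rewrite size_enum_ord.
by rewrite nth_ord_enum.
Qed.

Lemma codom_nth (x0 : T) n s : size s = n ->
  codom [ffun i : 'I_n => nth x0 s i] = s.
Proof.
move=> Hs; apply: (@eq_from_nth _ x0); first by rewrite size_codom card_ord.
rewrite size_codom card_ord => i Hi.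
by rewrite (nth_codom_ord x0 _ (Ordinal Hi)) ffunE.
Qed.

Lemma sum_ffun_codom (x0 : T) n (F : seq T -> nat) :
  \sum_(p : {ffun 'I_n -> T}) F (codom p) = \sum_(s <- allseq n) F s.
Proof.
rewrite -(big_map (fun p : {ffun 'I_n -> T} => codom p) predT F).
apply: perm_big; apply: uniq_perm; last 2 first.
- exact: uniq_allseq.
- move=> s; rewrite mem_allseq; apply/mapP/idP => [[p _ ->]|/eqP Hs].
    by rewrite size_codom card_ord.
  by exists [ffun i : 'I_n => nth x0 s i]; rewrite ?mem_index_enum ?codom_nth.
rewrite map_inj_uniq ?index_enum_uniq // => p q Hpq.
apply/ffunP => i; by rewrite -(nth_codom_ord x0 p) Hpq nth_codom_ord.
Qed.

Lemma card_codom_set (x0 : T) n (P : pred (seq T)) :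
  #|[set p : {ffun 'I_n -> T} | P (codom p)]| = \sum_(s <- allseq n) P s.
Proof.
rewrite -(sum_ffun_codom x0) -sum1_card [LHS]big_mkcond /=.
by apply: eq_bigr => p _; rewrite inE; case: (P _).
Qed.

Lemma sum_bool_card (P : pred T) : \sum_z (P z : nat) = #|[set z | P z]|.
Proof.
rewrite -sum1_card [RHS]big_mkcond /=.
by apply: eq_bigr => z _; rewrite inE; case: (P z).
Qed.

End Seqs.

Section Walks.
Variables (T : finType) (r : rel T).
Hypothesis rsym : symmetric r.

Definition walk (s : seq T) := if s is x :: t then path r x t else true.

Lemma walk_cons2 x y t : walk [:: x, y & t] = r x y && walk (y :: t).
Proof. by []. Qed.

Lemma walk_rcons x s y : walk (rcons (x :: s) y) = walk (x :: s) && r (last x s) y.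
Proof. by rewrite /= rcons_path. Qed.

Lemma walk_cat s x t : walk (s ++ x :: t) = walk (rcons s x) && walk (x :: t).
Proof.
case: s => [|y s] //=.
by rewrite cat_path rcons_path /= andbA.
Qed.

Lemma walk_rcons2 a y x : walk (rcons (rcons a y) x) = walk (rcons a y) && r y x.
Proof.
case: a => [|z a] /=; first by rewrite andbT.
by rewrite rcons_path last_rcons.
Qed.

Variable D : nat.
Hypothesis HD : forall x, \sum_y (r x y : nat) <= D.

Lemma walk_fwd m x : \sum_(c <- allseq T m) walk (x :: c) <= D ^ m.
Proof.
elim: m x => [|m IH] x; first by rewrite big_allseq0.
rewrite big_allseqS expnS.
apply: (@leq_trans (\sum_y r x y * D ^ m)); last by rewrite -big_distrl leq_mul2r HD orbT.
apply: leq_sum => y _.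
rewrite (eq_bigr (fun c => r x y * walk (y :: c))); last by move=> c _; rewrite walk_cons2 mulnb.
by rewrite -big_distrr leq_mul2l IH orbT.
Qed.

Lemma walk_bwd m x : \sum_(a <- allseq T m) walk (rcons a x) <= D ^ m.
Proof.
elim: m x => [|m IH] x; first by rewrite big_allseq0.
rewrite -addn1 big_allseq_cat expnD expn1.
rewrite (eq_bigr (fun a => \sum_y walk (rcons a y) * r y x)); last first.
  move=> a _; rewrite big_allseq1; apply: eq_bigr => y _.
  by rewrite cats1 walk_rcons2 mulnb.
rewrite exchange_big /=.
apply: (@leq_trans (\sum_y D ^ m * r y x)).
  by apply: leq_sum => y _; rewrite -big_distrl leq_mul2r IH orbT.
by rewrite -big_distrr leq_mul2l /=; under eq_bigr do rewrite rsym; rewrite HD orbT.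
Qed.

End Walks.

Section Lower.
Variables (T : finType) (r : rel T) (d : nat).
Hypothesis Hd : forall x, d <= \sum_y (r x y : nat).

Lemma count_avoid x (V : seq T) :
  d - size V <= \sum_y (r x y && (y \notin V) : nat).
Proof.
rewrite leq_subLR.
apply: (leq_trans (Hd x)).
apply: (@leq_trans (\sum_y ((y \in V) : nat) + \sum_y (r x y && (y \notin V) : nat))).
  by rewrite -big_split /=; apply: leq_sum => y _; case: (r x y); case: (y \in V).
rewrite leq_add2r (sum_bool_card (fun y => y \in V)).
apply: leq_trans (card_size V); apply: subset_leq_card; apply/fintype.subsetP => y; rewrite inE.
by [].
Qed.

Lemma walk_lower m x U : uniq (rcons U x) ->
  (d - (size U + m)) ^ m <=
  \sum_(t <- allseq T m) (uniq (U ++ x :: t) && walk r (x :: t) : nat).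
Proof.
elim: m x U => [|m IH] x U HU; first by rewrite big_allseq0 /= cats1 HU.
rewrite big_allseqS.
apply: (@leq_trans (\sum_y (r x y && (y \notin rcons U x)) *
   (d - (size U + m.+1)) ^ m)).
  rewrite -big_distrl /= expnS leq_mul //.
    apply: leq_trans (count_avoid x (rcons U x)).
    by rewrite size_rcons leq_sub2l // addnS ltnS leq_addr.
apply: leq_sum => y _.
case Hy: (r x y && (y \notin rcons U x)); last by rewrite mul0n.
rewrite mul1n.
move/andP: Hy => [Hxy HyU].
have HU' : uniq (rcons (rcons U x) y) by rewrite rcons_uniq HyU HU.
apply: (leq_trans _ (leq_trans (IH y (rcons U x) HU') _)).
  by rewrite size_rcons addSnnS.
apply: eq_leq; apply: eq_bigr => t _.
by rewrite cat_rcons walk_cons2 Hxy.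
Qed.

End Lower.
Section Bad.
Variables (T : finType) (r e : rel T).
Hypothesis rsym : symmetric r.
Variables (D Zm : nat).
Hypothesis HD : forall x, \sum_y (r x y : nat) <= D.
Hypothesis HZ : forall u w, \sum_x \sum_y (r u x && r w y && e x y : nat) <= Zm.

Lemma bool6 (a b c d f g : bool) :
  ((a && (b && ((c && d) && f))) && g : nat) <= a * (b * (c * (d * g))) * f.
Proof. by case: a; case: b; case: c; case: d; case: f; case: g. Qed.

Definition nested i j k :=
  \sum_(a <- allseq T i) \sum_x \sum_u \sum_(m <- allseq T (j - i - 2)) \sum_y
  \sum_(c <- allseq T (k - j))
   walk r (rcons a x) * (r x u * (walk r (u :: m) * (r (last u m) y * e x y))) *
   walk r (y :: c).

Lemma bad_step1 x0 k i j : i.+2 <= j -> j <= k ->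
 \sum_(s <- allseq T k.+1) (walk r s && e (nth x0 s i) (nth x0 s j) : nat)
 <= nested i j k.
Proof.
move=> Hij Hjk.
have -> : k.+1 = i + ((j - i - 2) + (k - j).+1).+2 by lia.
rewrite big_allseq_cat /nested big_seq [X in _ <= X]big_seq.
apply: leq_sum => a; rewrite mem_allseq => /eqP Ha.
rewrite big_allseqS; apply: leq_sum => x _.
rewrite big_allseqS; apply: leq_sum => u _.
rewrite big_allseq_cat big_seq [X in _ <= X]big_seq.
apply: leq_sum => m; rewrite mem_allseq => /eqP Hm.
rewrite big_allseqS; apply: leq_sum => y _.
apply: leq_sum => c _ /=.
have -> : nth x0 (a ++ [:: x, u & m ++ y :: c]) i = x.
  by rewrite nth_cat Ha ltnn subnn.
have -> : nth x0 (a ++ [:: x, u & m ++ y :: c]) j = y.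
  rewrite nth_cat Ha ltnNge (ltnW (ltnW Hij)) /=.
  have -> : j - i = (j - i - 2).+2 by lia.
  by rewrite /= nth_cat Hm ltnn subnn.
rewrite walk_cat walk_cons2.
rewrite (walk_cat r (u :: m) y c) walk_rcons.
exact: bool6.
Qed.

Lemma sumG_bound p :
  \sum_x \sum_u \sum_(m <- allseq T p) \sum_y
     (r x u * (walk r (u :: m) * (r (last u m) y * e x y)))
  <= #|T| * D ^ p * Zm.
Proof.
rewrite exchange_big /=.
apply: (@leq_trans (\sum_(u : T) D ^ p * Zm)); last first.
  by rewrite sum_nat_const mulnA.
apply: leq_sum => u _.
rewrite exchange_big /=.
apply: (@leq_trans (\sum_(m <- allseq T p) walk r (u :: m) * Zm)).
  apply: leq_sum => m _.
  apply: (@leq_trans (walk r (u :: m) *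
     \sum_x \sum_y (r u x && r (last u m) y && e x y : nat))); last by rewrite leq_mul2l HZ orbT.
  rewrite big_distrr /=; apply: leq_sum => x _.
  rewrite big_distrr /=; apply: leq_sum => y _.
  rewrite (rsym x u).
  by rewrite /=; case: (r u x); case: (path r u m); case: (r (last u m) y); case: (e x y).
by rewrite -big_distrl /= leq_mul2r walk_fwd ?orbT.
Qed.

Lemma bad_step2 k i j :
  nested i j k <= D ^ i * D ^ (k - j) * (#|T| * D ^ (j - i - 2) * Zm).
Proof.
set G := fun x => \sum_u \sum_(m <- allseq T (j - i - 2)) \sum_y
     (r x u * (walk r (u :: m) * (r (last u m) y * e x y))).
apply: (@leq_trans (\sum_(a <- allseq T i) \sum_x
           walk r (rcons a x) * (G x * D ^ (k - j)))).
  apply: leq_sum => a _; apply: leq_sum => x _.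
  rewrite /G big_distrl /= big_distrr /=; apply: leq_sum => u _.
  rewrite big_distrl /= big_distrr /=; apply: leq_sum => m _.
  rewrite big_distrl /= big_distrr /=; apply: leq_sum => y _.
  rewrite -big_distrr /= -!mulnA.
  by repeat apply: leq_mul => //; apply: walk_fwd.
rewrite exchange_big /=.
apply: (@leq_trans (\sum_x D ^ i * (G x * D ^ (k - j)))).
  by apply: leq_sum => x _; rewrite -big_distrl /= leq_mul2r walk_bwd ?orbT.
rewrite -big_distrr -big_distrl /= -mulnA leq_mul2l; apply/orP; right.
rewrite mulnC leq_mul2l; apply/orP; right.
exact: sumG_bound.
Qed.

Lemma bad_term x0 k i j : i.+2 <= j -> j <= k ->
 \sum_(s <- allseq T k.+1) (walk r s && e (nth x0 s i) (nth x0 s j) : nat)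
 <= D ^ i * D ^ (k - j) * (#|T| * D ^ (j - i - 2) * Zm).
Proof. by move=> H1 H2; apply: leq_trans (bad_step1 x0 H1 H2) (bad_step2 _ _ _). Qed.

End Bad.

Lemma leq_expr m n e : m <= n -> m ^ e <= n ^ e.
Proof. by case: e => [|e] H //; rewrite leq_exp2r. Qed.

Lemma ffact_le_exp n m : n ^_ m <= n ^ m.
Proof.
elim: m n => [|m IH] n; first by rewrite ffactn0.
rewrite ffactnS expnS leq_mul2l (leq_trans (IH _)) ?orbT //.
by rewrite leq_expr // leq_pred.
Qed.

Lemma exp_le_ffact n m : (n - m) ^ m <= n ^_ m.
Proof.
elim: m n => [|m IH] n; first by rewrite ffactn0.
rewrite ffactnS expnS leq_mul //; first exact: leq_subr.
apply: leq_trans (IH _); rewrite leq_expr //.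
by rewrite -subn1 -subnDA add1n.
Qed.

Section Zar.
Variables (T : finType) (e : rel T) (s : nat).
Hypothesis eirr : irreflexive e.
Hypothesis Hfree : ~ exists X Y : {set T},
      [/\ #|X| = s, #|Y| = s, [disjoint X & Y] &
          forall x y, x \in X -> y \in Y -> e x y].

Definition Ne x := [set y | e x y].

Lemma few_common (X S : {set T}) : #|S| = s ->
  #|[set x in X | S \subset Ne x]| <= s.-1.
Proof.
move=> HS; rewrite leqNgt; apply/negP => Hlt.
have Hs : s <= #|[set x in X | S \subset Ne x]|.
  by move: Hlt; case: (s) => //.
have : 0 < #|[set A : {set T} | A \subset [set x in X | S \subset Ne x] & #|A| == s]|.
  by rewrite cards_draws bin_gt0.
case/card_gt0P => X' /[!inE] /andP [HX' /eqP HX'c].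
apply: Hfree; exists X', S; split => //.
  apply/pred0P => x /=; apply/negP => /andP [Hx1 Hx2].
  move/fintype.subsetP: HX' => /(_ x Hx1) /[!inE] /andP [_ /fintype.subsetP /(_ x Hx2)].
  by rewrite inE eirr.
move=> x y Hx Hy.
move/fintype.subsetP: HX' => /(_ x Hx) /[!inE] /andP [_ /fintype.subsetP /(_ y Hy)].
by rewrite inE.
Qed.

Lemma binom_sum (X Y : {set T}) :
  \sum_(x in X) 'C(#|Y :&: Ne x|, s) <= s.-1 * 'C(#|Y|, s).
Proof.
rewrite -cards_draws.
have E : forall x, 'C(#|Y :&: Ne x|, s) = \sum_(S : {set T})
    ((S \subset Y) && (#|S| == s) && (S \subset Ne x) : nat).
  move=> x; rewrite -cards_draws (sum_bool_card
     (fun S : {set T} => (S \subset Y) && (#|S| == s) && (S \subset Ne x))).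
  by apply: eq_card => S; rewrite !inE finset.subsetI; case: (S \subset Y); case: (_ == s); case: (S \subset Ne x).
under eq_bigr => x _ do rewrite E.
rewrite exchange_big /=.
rewrite -(sum_bool_card (fun S : {set T} => (S \subset Y) && (#|S| == s))) big_distrr /=.
apply: leq_sum => S _.
case HS: ((S \subset Y) && (#|S| == s)); last first.
  by rewrite big1 // => x _; rewrite HS.
move/andP: HS => [HSY /eqP HSs].
rewrite muln1 (leq_trans _ (few_common X HSs)) //.
rewrite -sum1_card [X in X <= _]big_mkcond [X in _ <= X]big_mkcond /=.
apply: leq_sum => x _; rewrite !inE.
by case: (x \in X); case: (S \subset Ne x).
Qed.
End Zar.

Section Den.
Variables (T : finType) (e : rel T) (s : nat).
Hypothesis eirr : irreflexive e.
Hypothesis Hfree : ~ exists X Y : {set T},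
      [/\ #|X| = s, #|Y| = s, [disjoint X & Y] &
          forall x y, x \in X -> y \in Y -> e x y].

Definition Mz q := 4 * q * s.+1 + 2 * q * ((4 * q) ^ s * s.-1) + 1.

Lemma density q m (X Y : {set T}) : 0 < q -> Mz q <= m ->
  #|X| <= m -> #|Y| <= m ->
  q * \sum_(x in X) #|Y :&: Ne e x| <= m * m.
Proof.
move=> q0 Hm HX HY.
set t := m %/ (2 * q).
set nb := \sum_(x in X) (t < #|Y :&: Ne e x| : nat).
have H1 : \sum_(x in X) #|Y :&: Ne e x| <= m * t + m * nb.
  apply: (@leq_trans (\sum_(x in X) (t + m * (t < #|Y :&: Ne e x|)))).
    apply: leq_sum => x _.
    case: ltnP => H; last by rewrite muln0 addn0.
    by rewrite muln1 (leq_trans _ (leq_addl _ _)) // (leq_trans _ HY) // subset_leq_card // finset.subsetIl.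
  rewrite big_split /= sum_nat_const -big_distrr /= leq_add2r.
  by rewrite leq_mul2r HX orbT.
have H2 : nb * 'C(t, s) <= s.-1 * 'C(m, s).
  apply: (@leq_trans (\sum_(x in X) 'C(#|Y :&: Ne e x|, s))).
    rewrite /nb big_distrl /=; apply: leq_sum => x _.
    by case: ltnP => H //; rewrite mul1n leq_bin2l // ltnW.
  apply: leq_trans (binom_sum eirr Hfree X Y) _.
  by rewrite leq_mul2l leq_bin2l ?orbT.
have H3 : nb * t ^_ s <= s.-1 * m ^ s.
  have := H2; rewrite -(leq_pmul2r (fact_gt0 s)) -mulnA bin_ffact -mulnA bin_ffact.
  move=> H; apply: leq_trans H _; by rewrite leq_mul2l ffact_le_exp orbT.
have q2 : 0 < 2 * q by rewrite muln_gt0 q0.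
have Hceil := ltn_ceil m q2.
have H7 : t * (2 * q) <= m := leq_trunc_div m (2 * q).
have Hm' : 4 * q * s.+1 <= m by move: Hm; rewrite /Mz; lia.
have H4 : m <= 4 * q * (t - s).
  move: Hceil Hm'; rewrite -/t => Hc Hm2.
  have Hts : s < t by nia.
  nia.
have H5 : m ^ s <= (4 * q) ^ s * t ^_ s.
  apply: (@leq_trans ((4 * q * (t - s)) ^ s)); first exact: leq_expr.
  by rewrite expnMn leq_mul2l exp_le_ffact orbT.
have H6 : nb <= (4 * q) ^ s * s.-1.
  have m0 : 0 < m by move: Hm; rewrite /Mz; lia.
  have mpos : 0 < m ^ s by rewrite expn_gt0 m0.
  rewrite -(leq_pmul2r mpos).
  apply: (@leq_trans (nb * ((4 * q) ^ s * t ^_ s))); first by rewrite leq_mul2l H5 orbT.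
  by rewrite mulnCA -mulnA leq_mul2l H3 orbT.
have H8 : 2 * q * ((4 * q) ^ s * s.-1) <= m by move: Hm; rewrite /Mz; lia.
set B := (4 * q) ^ s * s.-1 in H6 H8.
apply: (@leq_trans (q * (m * t + m * nb))); first by rewrite leq_mul2l H1 orbT.
nia.
Qed.
End Den.

Section Link.
Variables (T : finType) (r : rel T) (x0 : T).

Lemma walk_nthP s :
  walk r s = [forall i : 'I_(size s).-1, r (nth x0 s i) (nth x0 s i.+1)].
Proof.
apply/idP/forallP => [H i|H].
- have Hi := ltn_ord i.
  elim: s H i Hi => [|x [|y t] IH] //= /andP [Hxy Ht] i Hi.
  case: i Hi => [[|i] Hi] Hi' //=.
  exact: (IH Ht (Ordinal (Hi' : i < (size (y :: t)).-1)) Hi').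
- elim: s H => [|x [|y t] IH] //= H.
  apply/andP; split; first exact: (H (Ordinal (isT : 0 < (size [:: x, y & t]).-1))).
  apply: IH => i.
  have Hi : i.+1 < (size [:: x, y & t]).-1 by rewrite /= ltnS ltn_ord.
  exact: (H (Ordinal Hi)).
Qed.

End Link.

Section Link2.
Variables (T : finType) (e : rel T) (A : {set T}) (k : nat) (x0 : T).

Definition Palt (s : seq T) := uniq s && walk (crossing e A) s.
Definition Pind (s : seq T) := [forall i : 'I_k.+1, forall j : 'I_k.+1,
  e (nth x0 s i) (nth x0 s j) ==> ((i : nat).+1 == j) || ((j : nat).+1 == i)].

Lemma alt_path_codom (p : {ffun 'I_k.+1 -> T}) : alt_path e A p = Palt (codom p).
Proof.
rewrite /alt_path /Palt; congr andb.
  try done.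
rewrite (walk_nthP _ x0) size_codom card_ord /=.
apply: eq_forallb => i.
have Hi : (i : nat) < k.+1 by apply: leqW (ltn_ord i).
have Hi' : (i : nat).+1 < k.+1 by rewrite ltnS (ltn_ord i).
by rewrite -(nth_codom_ord x0 p (inord i)) -(nth_codom_ord x0 p (inord i.+1)) !inordK.
Qed.

Lemma induced_codom (p : {ffun 'I_k.+1 -> T}) : induced_path e p = Pind (codom p).
Proof.
rewrite /induced_path /Pind; apply: eq_forallb => i; apply: eq_forallb => j.
by rewrite !nth_codom_ord.
Qed.

Lemma card_alt : #|alt_paths e A k| = \sum_(s <- allseq T k.+1) Palt s.
Proof.
rewrite -(card_codom_set x0 k.+1 Palt); apply: eq_card => p.
by rewrite !inE alt_path_codom.
Qed.

Lemma card_ind : #|induced_alt_paths e A k| =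
   \sum_(s <- allseq T k.+1) (Palt s && Pind s).
Proof.
rewrite -(card_codom_set x0 k.+1 (fun s => Palt s && Pind s)); apply: eq_card => p.
by rewrite !inE alt_path_codom induced_codom.
Qed.

End Link2.

Lemma leq_big1 (I : finType) (F : I -> nat) i : F i <= \sum_j F j.
Proof. by rewrite (bigD1 i) //= leq_addr. Qed.

Lemma crossing_sym (T : finType) (e : rel T) (A : {set T}) :
  symmetric e -> symmetric (crossing e A).
Proof. by move=> hs x y; rewrite /crossing hs eq_sym. Qed.

Lemma cross_le_sum (T : finType) (e : rel T) (A : {set T}) :
  cross_edges e A <= \sum_x deg1 e A x.
Proof.
rewrite /cross_edges.
apply: (@leq_trans #|[set p : T * T | crossing e A p.1 p.2]|).
  apply: subset_leq_card; apply/fintype.subsetP => [[x y]].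
  by rewrite !inE /crossing /= => /andP [/andP [-> ->] /negPf ->].
rewrite -(sum_bool_card (fun p : T * T => crossing e A p.1 p.2)).
rewrite (eq_bigr (fun x => \sum_y (crossing e A x y : nat))); last first.
  by move=> x _; rewrite sum_bool_card.
by rewrite pair_bigA.
Qed.

Lemma bad_pointwise (T : finType) (e : rel T) (A : {set T}) k (x0 : T) s :
  symmetric e -> irreflexive e ->
  (Palt e A s && ~~ Pind e k x0 s : nat) <=
  \sum_(i < k.+1) \sum_(j < k.+1)
    (((i : nat).+2 <= j) && (walk (crossing e A) s && e (nth x0 s i) (nth x0 s j)) : nat).
Proof.
move=> hsym hirr.
case H: (Palt e A s && ~~ Pind e k x0 s) => //.
move/andP: H => [/andP [_ Hw] /forallPn [i /forallPn [j]]].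
rewrite negb_imply negb_or => /andP [He /andP [H1 H2]].
case: (ltngtP i j) => Hc.
- apply: leq_trans (leq_big1 _ i); apply: leq_trans (leq_big1 _ j).
  by rewrite Hw He andbT /=; move: Hc H1; case: (i : nat) => [|a]; case: (j : nat) => [|b] //=; lia.
- apply: leq_trans (leq_big1 _ j); apply: leq_trans (leq_big1 _ i).
  by rewrite Hw hsym He andbT /=; move: Hc H2; case: (i : nat) => [|a]; case: (j : nat) => [|b] //=; lia.
- by move: He; rewrite (val_inj Hc) hirr.
Qed.

From mathcomp Require Import lra ring.
Unset Implicit Arguments.
Set Strict Implicit.
Local Open Scope ring_scope.

Theorem lemma4p7 (R : realType) (k s : nat) (K eps : R) :
  (2 <= k)%N -> (2 <= s)%N -> 0 < K -> 0 < eps ->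
  exists C : R, 0 < C /\
    forall (T : finType) (e : rel T) (A : {set T}),
      symmetric e -> irreflexive e ->
      Kss_free e s ->
      C * (#|T|%:R) `^ (1 + k%:R^-1) <= (cross_edges e A)%:R ->
      almost_regular e A K ->
      (1 - eps) * (#|alt_paths e A k|)%:R <= (#|induced_alt_paths e A k|)%:R.
Proof.
move=> hk hs hK heps.
have [K' HK'] : exists K' : nat, K <= K'.+1%:R.
  exists (Num.Def.archi_bound K); apply/ltW.
  apply: lt_le_trans (archi_boundP (ltW hK)) _; by rewrite ler_nat.
set K1 := K'.+1.
set c := ((k.+1) ^ 2 * (2 * K1) ^ k)%N.
have [q Hq] : exists q : nat, (c%:R : R) <= eps * q.+1%:R.
  have := archi_boundP (divr_ge0 (ler0n R c) (ltW heps)).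
  rewrite ltr_pdivrMr // => H.
  exists (Num.Def.archi_bound (c%:R / eps)); rewrite mulrC.
  by apply: le_trans (ltW H) _; rewrite ler_pM2r // ler_nat.
set Q := q.+1.
set d0 := (Mz s Q + 2 * k + 1)%N.
exists (K * d0%:R); split; first by rewrite mulr_gt0 // ltr0n addn1.
move=> T e A hsym hirr Hfree Hcross Hreg.
case: (posnP #|T|) => Hn.
  have H0 : #|alt_paths e A k| = 0%N.
    apply/eqP; rewrite -leqn0; apply: leq_trans (max_card _) _.
    by rewrite card_ffun Hn card_ord exp0n.
  by rewrite H0 mulr0 ler0n.
case/card_gt0P: Hn => x0 _.
set r := crossing e A.
have rsym : symmetric r by apply: crossing_sym.
have Hdeg v : (\sum_y (r v y : nat))%N = deg1 e A v by rewrite sum_bool_card.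
have Hd0 : forall v, (d0 <= deg1 e A v)%N.
  move=> v.
  have n1 : 1 <= (#|T|%:R : R) by rewrite ler1n; apply/card_gt0P; exists x0.
  have H1 : (K * d0%:R) * #|T|%:R <= (cross_edges e A)%:R.
    apply: le_trans Hcross; rewrite ler_pM2l ?mulr_gt0 ?ltr0n ?addn1 //.
    by apply: le1r_powR => //; rewrite lerDl invr_ge0 ler0n.
  have H2 : ((cross_edges e A)%:R : R) <= #|T|%:R * (K * (deg1 e A v)%:R).
    apply: (@le_trans _ _ ((\sum_x deg1 e A x)%:R)).
      by rewrite ler_nat; exact: cross_le_sum.
    rewrite natr_sum.
    apply: (@le_trans _ _ (\sum_(x : T) K * (deg1 e A v)%:R)).
      by apply: ler_sum => x _; exact: Hreg.
    by rewrite sumr_const [X in _ <= X]mulr_natl.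
  have : K * d0%:R * #|T|%:R <= K * (deg1 e A v)%:R * #|T|%:R.
    by rewrite [X in _ <= X]mulrC; apply: le_trans H1 H2.
  by rewrite (ler_pM2r (lt_le_trans ltr01 n1)) (ler_pM2l hK) ler_nat.
case: (@arg_minnP T x0 xpredT (deg1 e A) isT) => vm _ Hvm.
set dl := deg1 e A vm.
set Dl := (K1 * dl)%N.
have Hlow : forall u, (dl <= \sum_y (r u y : nat))%N by move=> u; rewrite Hdeg; exact: Hvm.
have Hup : forall u, (\sum_y (r u y : nat) <= Dl)%N.
  move=> u; rewrite Hdeg -(ler_nat R) natrM.
  apply: le_trans (Hreg u vm) _.
  by rewrite ler_wpM2r.
have Hdl : (d0 <= dl)%N := Hd0 vm.
have HDl : (Mz s Q <= Dl)%N.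
  apply: (leq_trans _ (leq_pmull _ (isT : (0 < K1)%N))).
  by apply: leq_trans Hdl; rewrite /d0 -addnA leq_addr.
set Zm := (Dl * Dl %/ Q)%N.
have HZ : forall u w, (\sum_x \sum_y (r u x && r w y && e x y : nat) <= Zm)%N.
  move=> u w; rewrite leq_divRL // mulnC.
  have := density hirr Hfree (q:=Q) (m:=Dl) (X := [set x | r u x]) (Y := [set y | r w y])
     (ltn0Sn q) HDl.
  rewrite -!sum_bool_card !Hup => /(_ isT isT).
  apply: leq_trans; rewrite leq_mul2l; apply/orP; right.
  rewrite [X in (_ <= X)%N]big_mkcond /=; apply: eq_leq; apply: eq_bigr => x _; rewrite inE.
  case: (r u x) => /=; last by rewrite big1.
  by rewrite sum_bool_card; apply: eq_card => y; rewrite !inE.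
rewrite (card_alt e A k x0) (card_ind e A k x0).
set alt := (\sum_(s0 <- allseq T k.+1) Palt e A s0)%N.
set good := (\sum_(s0 <- allseq T k.+1) (Palt e A s0 && Pind e k x0 s0 : nat))%N.
set bad := (\sum_(s0 <- allseq T k.+1) (Palt e A s0 && ~~ Pind e k x0 s0 : nat))%N.
have Hsplit : alt = (good + bad)%N.
  rewrite /alt /good /bad -big_split /=; apply: eq_bigr => s0 _.
  by case: (Palt e A s0); case: (Pind e k x0 s0).
have Hlow_alt : (#|T| * (dl - k) ^ k <= alt)%N.
  rewrite /alt big_allseqS.
  apply: (@leq_trans (\sum_(x : T) (dl - k) ^ k)); first by rewrite sum_nat_const.
  apply: leq_sum => x _.
  have := @walk_lower _ _ _ Hlow k x [::] isT.
  by rewrite add0n.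
have Hterm : forall i j : 'I_k.+1,
   (Q * \sum_(s0 <- allseq T k.+1)
      (((i : nat).+2 <= j)%N && (walk r s0 && e (nth x0 s0 i) (nth x0 s0 j)) : nat)
    <= #|T| * Dl ^ k)%N.
  move=> i j.
  case Hij: ((i : nat).+2 <= j)%N; last by rewrite big1 ?muln0.
  have Hjk : (j <= k)%N by rewrite -ltnS ltn_ord.
  have := bad_term rsym Hup HZ x0 Hij Hjk.
  rewrite -(leq_pmul2l (ltn0Sn q)) => H; apply: leq_trans H _.
  have HQZ : (Q * Zm <= Dl * Dl)%N by rewrite mulnC leq_trunc_div.
  have -> : (Dl ^ k = Dl ^ i * Dl ^ (k - j) * Dl ^ (j - i - 2) * (Dl * Dl))%N.
    by change (Dl * Dl)%N with (Dl ^ 2)%N; rewrite -!expnD; congr (expn _ _); lia.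
  move: (Dl ^ i)%N (Dl ^ (k - j))%N (Dl ^ (j - i - 2))%N => a b d.
  have -> : (Q * (a * b * (#|T| * d * Zm)) = (a * b * (#|T| * d)) * (Q * Zm))%N by ring.
  have -> : (#|T| * (a * b * d * (Dl * Dl)) = (a * b * (#|T| * d)) * (Dl * Dl))%N by ring.
  by rewrite leq_mul2l HQZ orbT.
have Hbad : (Q * bad <= c * (#|T| * (dl - k) ^ k))%N.
  apply: (@leq_trans (Q * \sum_(s0 <- allseq T k.+1) \sum_(i < k.+1) \sum_(j < k.+1)
    (((i : nat).+2 <= j)%N && (walk r s0 && e (nth x0 s0 i) (nth x0 s0 j)) : nat))).
    rewrite leq_mul2l; apply/orP; right; apply: leq_sum => s0 _.
    exact: bad_pointwise.
  rewrite exchange_big big_distrr /=.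
  apply: (@leq_trans (\sum_(i < k.+1) \sum_(j < k.+1) (#|T| * Dl ^ k))).
    apply: leq_sum => i _; rewrite exchange_big big_distrr /=.
    by apply: leq_sum => j _; apply: Hterm.
  have HDk : (Dl ^ k <= (2 * K1) ^ k * (dl - k) ^ k)%N.
    rewrite -expnMn leq_expr // /Dl.
    have -> : (2 * K1 * (dl - k) = K1 * (2 * (dl - k)))%N by ring.
    rewrite leq_mul2l; apply/orP; right.
    by move: Hdl; rewrite /d0; lia.
  rewrite !sum_nat_const !card_ord.
  apply: (@leq_trans ((k.+1 * k.+1 * #|T|) * ((2 * K1) ^ k * (dl - k) ^ k))%N).
    have -> : (k.+1 * (k.+1 * (#|T| * Dl ^ k)) = (k.+1 * k.+1 * #|T|) * Dl ^ k)%N by ring.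
    by rewrite leq_mul2l HDk orbT.
  apply: eq_leq; rewrite /c; change (k.+1 ^ 2)%N with (k.+1 * k.+1)%N; ring.
have Hbad' : (bad%:R : R) <= eps * alt%:R.
  have H : ((Q * bad)%:R : R) <= (c * alt)%:R.
    by rewrite ler_nat; apply: leq_trans Hbad _; rewrite leq_mul2l Hlow_alt orbT.
  move: H; rewrite [((Q * bad)%N)%:R]natrM [((c * alt)%N)%:R]natrM => H.
  have H' : (Q%:R : R) * bad%:R <= Q%:R * (eps * alt%:R).
    apply: le_trans H _.
    rewrite mulrA (mulrC _ eps).
    by apply: ler_wpM2r => //; rewrite mulrC.
  by move: H'; rewrite ler_pM2l ?ltr0n.
rewrite Hsplit natrD; rewrite Hsplit natrD in Hbad'.
lra.
Qed.
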